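(* The finite derivative test $\mathcal D$ is error-free.
   Context: Let $\Omega=\{0,1\}$, $\Omega^\infty$ the set of infinite sequences $\omega=(\omega_1,\omega_2,\dots)$, and $\omega^t=(\omega_1,\dots,\omega_t)$ (also used for the cylinder set of all sequences with this prefix; $\omega^0=\emptyset$). $\mathcal G_t$ is the $\sigma$-algebra generated by the length-$t$ cylinders and $\mathcal G_\infty$ the $\sigma$-algebra generated by all cylinders. $\Delta(\Omega)$ is the set of probability distributions on $\Omega$; for $p\in\Delta(\Omega)$ and $x\in\Omega$, $p[x]$ is the probability of $x$. A forecasting strategy is a map $f:\bigcup_{t\ge0}(\Omega\times\Delta(\Omega)\times\Delta(\Omega))^t\to\Delta(\Omega)$; $F$ is the set of all forecasting strategies. Given an ordered pair $\vec f=(f,g)\in F\times F$ and $\omega\in\Omega^\infty$, the play path $(\omega,\vec f)$ is defined recursively: $(\omega,\vec f)^0=\emptyset$ and its $t$-th entry is $(\omega_t,f((\omega,\vec f)^{t-1}),g((\omega,\vec f)^{t-1}))$, where $(\omega,\vec f)^t$ is the prefix of length $t$. The pair $\vec f$ induces two probability measures on $(\Omega^\infty,\mathcal G_\infty)$, again denoted $f$ and $g$ (they depend on the pair), determined by $f(\omega^t)=\prod_{n=1}^t f((\omega,\vec f)^{n-1})[\omega_n]$ and $g(\omega^t)=\prod_{n=1}^t g((\omega,\vec f)^{n-1})[\omega_n]$. A (cardinal comparison) test is a sequence $T=(T_t)_{t>0}$ of $\mathcal G_t$-measurable functions $T_t:(\Omega\times\Delta(\Omega)\times\Delta(\Omega))^\infty\to[0,1]$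 (depending only on the first $t$ entries); write $T_t(\omega,\vec f)=T_t((\omega,\vec f))$ and $T(\omega,\vec f)=\lim_t T_t(\omega,\vec f)$ whenever the limit exists. For $\epsilon\in(0,1)$ let $L^{\vec f}_{T,\epsilon}=\{\omega:T(\omega,\vec f)\text{ exists and }>\epsilon\}$ and $R^{\vec f}_{T,\epsilon}=\{\omega:T(\omega,\vec f)\text{ exists and }<\epsilon\}$. $T$ is error-free if for all $\vec f=(f,g)\in F\times F$ and every measurable $A\subseteq\Omega^\infty$: for all $\epsilon\in(0,\frac12)$, $f(A\cap R^{\vec f}_{T,\epsilon})\le\frac{\epsilon}{1-\epsilon}\,g(A\cap R^{\vec f}_{T,\epsilon})$, and for all $\epsilon\in(\frac12,1)$, $g(A\cap L^{\vec f}_{T,\epsilon})\le\frac{1-\epsilon}{\epsilon}\,f(A\cap L^{\vec f}_{T,\epsilon})$ (with $f,g$ the measures induced by $\vec f$). The finite derivative test $\mathcal D$ is defined for $t\ge0$ by $\mathcal D_{t+1}(\omega,\vec f)=\frac{f(\omega^t)}{f(\omega^t)+g(\omega^t)}$ if $f(\omega^t)>0$ or $g(\omega^t)>0$, and $\frac12$ otherwise. *)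

(* Defs.v *)
From Stdlib Require Import Reals Lra List ClassicalEpsilon.
Import ListNotations.
Open Scope R_scope.

(** Omega = {0,1} is represented by bool (true = 1).
    Delta(Omega): a probability distribution on bool, given by the probability
    of [true], a real in [0,1]. *)
Definition Dist := { p : R | 0 <= p <= 1 }.

Definition prob (d : Dist) (x : bool) : R :=
  if x then proj1_sig d else 1 - proj1_sig d.

(** An entry of a play path: (omega_t, forecast of f, forecast of g). *)
Definition Entry := (bool * Dist * Dist)%type.

(** Finite histories are lists in chronological order (head = first entry). *)
Definition Strategy := list Entry -> Dist.

(** Infinite sequences omega = (omega_1, omega_2, ...), indexed from 0:
    omega_{n+1} = w n. *)
Definition Seq := nat -> bool.

Fixpoint hist (f g : Strategy) (w : Seq) (t : nat) : list Entry :=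
  match t with
  | O => []
  | S t' => let h := hist f g w t' in h ++ [(w t', f h, g h)]
  end.

Fixpoint prodR (n : nat) (F : nat -> R) : R :=
  match n with
  | O => 1
  | S n' => prodR n' F * F n'
  end.

Definition ext (s : list bool) : Seq := fun n => nth n s false.
Definition cyl (s : list bool) (w : Seq) : Prop :=
  forall n, (n < length s)%nat -> w n = nth n s false.

Definition cylprob (which f g : Strategy) (s : list bool) : R :=
  prodR (length s) (fun n => prob (which (hist f g (ext s) n)) (ext s n)).

Inductive measurable : (Seq -> Prop) -> Prop :=
| meas_cyl : forall s, measurable (cyl s)
| meas_compl : forall A, measurable A -> measurable (fun w => ~ A w)
| meas_union : forall A : nat -> Seq -> Prop,
    (forall k, measurable (A k)) -> measurable (fun w => exists k, A k w)
| meas_ext : forall A B, (forall w, A w <-> B w) -> measurable A -> measurable B.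

(** Countable covers by cylinders (None = empty piece). *)
Definition Cover := nat -> option (list bool).

Definition covers (c : Cover) (A : Seq -> Prop) : Prop :=
  forall w, A w -> exists k s, c k = Some s /\ cyl s w.

Definition cover_term (which f g : Strategy) (c : Cover) (k : nat) : R :=
  match c k with Some s => cylprob which f g s | None => 0 end.

Definition is_glb (E : R -> Prop) (m : R) : Prop :=
  (forall x, E x -> m <= x) /\
  (forall m', (forall x, E x -> m' <= x) -> m' <= m).

(** The measure induced on G_infinity (Caratheodory extension of the
    cylinder premeasure), given by the outer measure
    inf { sum_k P(cyl s_k) : A subset of the union of the cyl s_k }. *)
Definition measure (which f g : Strategy) (A : Seq -> Prop) : R :=
  epsilon (inhabits 0)
    (is_glb (fun x => exists c, covers c A /\ infinite_sum (cover_term which f g c) x)).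

(** A test: T_t(omega, f) = T applied to the length-t prefix of the play path
    (so T_t depends only on the first t entries). *)
Definition Test := list Entry -> R.

Definition test_limit (T : Test) (f g : Strategy) (w : Seq) (l : R) : Prop :=
  Un_cv (fun t => T (hist f g w (S t))) l.

Definition Lset (T : Test) (f g : Strategy) (eps : R) (w : Seq) : Prop :=
  exists l, test_limit T f g w l /\ l > eps.
Definition Rset (T : Test) (f g : Strategy) (eps : R) (w : Seq) : Prop :=
  exists l, test_limit T f g w l /\ l < eps.

Definition error_free (T : Test) : Prop :=
  forall (f g : Strategy) (A : Seq -> Prop), measurable A ->
    (forall eps, 0 < eps < 1/2 ->
       measure f f g (fun w => A w /\ Rset T f g eps w)
       <= eps / (1 - eps) * measure g f g (fun w => A w /\ Rset T f g eps w)) /\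
    (forall eps, 1/2 < eps < 1 ->
       measure g f g (fun w => A w /\ Lset T f g eps w)
       <= (1 - eps) / eps * measure f f g (fun w => A w /\ Lset T f g eps w)).

(** The finite derivative test: on a history h of length t+1,
    D_{t+1} = f(omega^t) / (f(omega^t) + g(omega^t)) (or 1/2 if both are 0),
    where f(omega^t), g(omega^t) are the products of the forecasts recorded
    in the first t entries of h. *)
Definition fprod (h : list Entry) : R :=
  fold_right (fun e acc => prob (snd (fst e)) (fst (fst e)) * acc) 1 h.
Definition gprod (h : list Entry) : R :=
  fold_right (fun e acc => prob (snd e) (fst (fst e)) * acc) 1 h.

Definition derivative_test : Test := fun h =>
  let h' := removelast h in
  let F := fprod h' in
  let G := gprod h' in
  if Rlt_dec 0 F then F / (F + G)
  else if Rlt_dec 0 G then F / (F + G) else 1/2.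

(* Main.v *)
Require Import Defs.
From Stdlib Require Import Reals Lra Lia List PArith Classical ClassicalEpsilon FunctionalExtensionality.
Import ListNotations.
Open Scope R_scope.

Lemma hist_ext f g w w' n :
  (forall i, (i < n)%nat -> w i = w' i) -> hist f g w n = hist f g w' n.
Proof.
  induction n; intros H; simpl; auto.
  rewrite IHn by (intros; apply H; lia). rewrite H by lia. reflexivity.
Qed.

Lemma prodR_ext n F F' : (forall i, (i < n)%nat -> F i = F' i) -> prodR n F = prodR n F'.
Proof.
  induction n; intros H; simpl; auto.
  rewrite IHn by (intros; apply H; lia). rewrite H by lia. reflexivity.
Qed.

Lemma prob_range d x : 0 <= prob d x <= 1.
Proof. destruct d as [p Hp]; destruct x; simpl; lra. Qed.

Lemma prodR_nonneg n F : (forall i, 0 <= F i) -> 0 <= prodR n F.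
Proof.
  intros H; induction n; simpl; [lra|]. apply Rmult_le_pos; auto.
Qed.

Lemma cylprob_nonneg which f g s : 0 <= cylprob which f g s.
Proof. apply prodR_nonneg; intros; apply prob_range. Qed.

Lemma ext_app_lt s u i : (i < length s)%nat -> ext (s ++ u) i = ext s i.
Proof. intros; unfold ext; rewrite app_nth1; auto. Qed.

Lemma cylprob_snoc which f g s b :
  cylprob which f g (s ++ [b]) =
  cylprob which f g s * prob (which (hist f g (ext s) (length s))) b.
Proof.
  unfold cylprob. rewrite length_app; simpl. rewrite Nat.add_1_r; simpl.
  f_equal.
  - apply prodR_ext; intros i Hi. rewrite ext_app_lt by auto.
    f_equal. f_equal. apply hist_ext; intros; apply ext_app_lt; lia.
  - unfold ext at 2. rewrite app_nth2 by lia. rewrite Nat.sub_diag. simpl.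
    f_equal. f_equal. apply hist_ext; intros; apply ext_app_lt; lia.
Qed.

Lemma cylprob_split which f g s :
  cylprob which f g (s ++ [false]) + cylprob which f g (s ++ [true]) = cylprob which f g s.
Proof.
  rewrite !cylprob_snoc. unfold prob. ring.
Qed.

Definition pre (w : Seq) (t : nat) : list bool := map w (seq 0 t).

Lemma pre_length w t : length (pre w t) = t.
Proof. unfold pre; rewrite length_map, length_seq; auto. Qed.

Lemma ext_pre w t i : (i < t)%nat -> ext (pre w t) i = w i.
Proof.
  intros; unfold ext, pre.
  rewrite nth_indep with (d' := w 0%nat) by (rewrite length_map, length_seq; auto).
  rewrite map_nth, seq_nth; auto.
Qed.

Lemma fold_app_snoc (F : Entry -> R) l e :
  fold_right (fun e acc => F e * acc) 1 (l ++ [e]) = fold_right (fun e acc => F e * acc) 1 l * F e.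
Proof. induction l; simpl; [ring|]. rewrite IHl; ring. Qed.

Lemma fprod_hist f g w t : fprod (hist f g w t) = cylprob f f g (pre w t).
Proof.
  unfold cylprob; rewrite pre_length.
  transitivity (prodR t (fun n => prob (f (hist f g w n)) (w n))).
  - induction t; [reflexivity|]. cbn [hist prodR]. unfold fprod in *. rewrite fold_app_snoc. f_equal; exact IHt.
  - apply prodR_ext; intros i Hi. rewrite ext_pre by auto. f_equal. f_equal.
    apply hist_ext; intros; rewrite ext_pre by lia; auto.
Qed.

Lemma gprod_hist f g w t : gprod (hist f g w t) = cylprob g f g (pre w t).
Proof.
  unfold cylprob; rewrite pre_length.
  transitivity (prodR t (fun n => prob (g (hist f g w n)) (w n))).
  - induction t; [reflexivity|]. cbn [hist prodR]. unfold gprod in *. rewrite fold_app_snoc. f_equal; exact IHt.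
  - apply prodR_ext; intros i Hi. rewrite ext_pre by auto. f_equal. f_equal.
    apply hist_ext; intros; rewrite ext_pre by lia; auto.
Qed.

Lemma D_hist f g w t :
  derivative_test (hist f g w (S t)) =
  let F := cylprob f f g (pre w t) in let G := cylprob g f g (pre w t) in
  if Rlt_dec 0 F then F / (F + G) else if Rlt_dec 0 G then F / (F + G) else 1/2.
Proof.
  unfold derivative_test. simpl hist. rewrite removelast_last.
  rewrite fprod_hist, gprod_hist. reflexivity.
Qed.

Lemma cyl_pre s w : cyl s w -> pre w (length s) = s.
Proof.
  intros H. apply nth_ext with (d := false) (d' := false). { apply pre_length. }
  intros n Hn. rewrite pre_length in Hn. rewrite <- (H n Hn).
  change (nth n (pre w (length s)) false) with (ext (pre w (length s)) n).
  rewrite ext_pre; auto.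
Qed.

Lemma pre_add w a b : pre w (a + b) = pre w a ++ map w (seq a b).
Proof. unfold pre. rewrite seq_app, map_app. reflexivity. Qed.

Lemma cyl_pre_self w t : cyl (pre w t) w.
Proof.
  intros n Hn. rewrite pre_length in Hn.
  change (nth n (pre w t) false) with (ext (pre w t) n). rewrite ext_pre; auto.
Qed.

Definition lsum {A} (F : A -> R) (l : list A) : R := fold_right (fun a acc => F a + acc) 0 l.

Lemma lsum_app {A} (F : A -> R) l l' : lsum F (l ++ l') = lsum F l + lsum F l'.
Proof. induction l; simpl; [ring|]. unfold lsum in *; simpl. rewrite IHl; ring. Qed.

Lemma lsum_nonneg {A} (F : A -> R) l : (forall a, 0 <= F a) -> 0 <= lsum F l.
Proof. intros H; induction l; simpl; [lra|]. specialize (H a); lra. Qed.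

Lemma lsum_le {A} (F G : A -> R) l : (forall a, In a l -> F a <= G a) -> lsum F l <= lsum G l.
Proof.
  induction l; simpl; intros H; [lra|].
  assert (F a <= G a) by auto. assert (lsum F l <= lsum G l) by auto. lra.
Qed.

Lemma lsum_ext {A} (F G : A -> R) l : (forall a, F a = G a) -> lsum F l = lsum G l.
Proof. intros H; induction l; simpl; auto. unfold lsum in *; simpl; rewrite IHl, H; auto. Qed.

Lemma lsum_scal {A} (F : A -> R) c l : lsum (fun a => c * F a) l = c * lsum F l.
Proof. induction l; simpl; [ring|]. unfold lsum in *; simpl; rewrite IHl; ring. Qed.

Definition tails (b : bool) (L : list (list bool)) : list (list bool) :=
  flat_map (fun u => match u with c :: u' => if Bool.eqb c b then [u'] else [] | [] => [] end) L.

Lemma tails_in b L u' : In u' (tails b L) -> In (b :: u') L.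
Proof.
  induction L as [|a L IH]; simpl; [tauto|]. intros H. apply in_app_or in H as [H|H].
  - destruct a as [|c a]; [destruct H|]. destruct (Bool.eqb c b) eqn:E; [|destruct H].
    apply Bool.eqb_prop in E; subst. destruct H as [H|[]]; subst; auto.
  - auto.
Qed.

Lemma tails_nodup b L : NoDup L -> NoDup (tails b L).
Proof.
  induction L as [|a L IH]; simpl; intros H; [constructor|]. inversion H; subst.
  destruct a as [|c a]; simpl; auto. destruct (Bool.eqb c b) eqn:E; simpl; auto.
  apply Bool.eqb_prop in E; subst. constructor; auto.
  intros Hin; apply tails_in in Hin; auto.
Qed.

Lemma lsum_tails (F : list bool -> R) L : (forall u, In u L -> u <> []) ->
  lsum F L = lsum (fun u => F (false :: u)) (tails false L) + lsum (fun u => F (true :: u)) (tails true L).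
Proof.
  induction L as [|a L IH]; intros H.
  - unfold lsum; simpl; ring.
  - assert (IH' := IH (fun u Hu => H u (or_intror Hu))).
    destruct a as [|c a]; [exfalso; apply (H []); simpl; auto|].
    unfold tails in *; cbn [flat_map].
    change (lsum F ((c :: a) :: L)) with (F (c :: a) + lsum F L).
    rewrite !lsum_app, IH'.
    destruct c; simpl; unfold lsum; simpl; ring.
Qed.

Definition firsthit (cond : list bool -> Prop) (s u : list bool) : Prop :=
  cond (s ++ u) /\ forall j, (j < length u)%nat -> ~ cond (s ++ firstn j u).

Lemma lsum_allnil (F : list bool -> R) L : NoDup L -> (forall u, In u L -> u = []) ->
  0 <= F [] -> lsum F L <= F [].
Proof.
  intros ND H H0. destruct L as [|a L]; [unfold lsum; simpl; lra|].
  destruct L as [|b L].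
  - rewrite (H a) by (simpl; auto). unfold lsum; simpl. lra.
  - exfalso. inversion ND; subst. apply H3. rewrite (H a), (H b) by (simpl; auto). simpl; auto.
Qed.

Section Antichain.
Variable P : list bool -> R.
Hypothesis Pnn : forall s, 0 <= P s.
Hypothesis Psplit : forall s, P (s ++ [false]) + P (s ++ [true]) = P s.
Variable cond : list bool -> Prop.

Lemma antichain M : forall s L, NoDup L ->
  (forall u, In u L -> (length u <= M)%nat /\ firsthit cond s u) ->
  lsum (fun u => P (s ++ u)) L <= P s.
Proof.
  induction M as [|M IH]; intros s L ND H.
  - assert (Hn : forall u, In u L -> u = []).
    { intros u Hu. destruct (H u Hu) as [Hl _]. destruct u; simpl in Hl; auto; lia. }
    replace (P s) with ((fun u => P (s ++ u)) []) by (simpl; rewrite app_nil_r; auto). apply lsum_allnil; auto.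
  - destruct (in_dec (list_eq_dec Bool.bool_dec) [] L) as [Hin|Hnin].
    + assert (Hn : forall u, In u L -> u = []).
      { intros u Hu. destruct u as [|b u]; auto. exfalso.
        destruct (H _ Hu) as [_ [_ Hf]]. destruct (H _ Hin) as [_ [Hc _]].
        apply (Hf 0%nat); simpl; [lia|]. exact Hc. }
      replace (P s) with ((fun u => P (s ++ u)) []) by (simpl; rewrite app_nil_r; auto). apply lsum_allnil; auto.
    + rewrite lsum_tails by (intros u Hu E; subst; auto).
      rewrite <- Psplit.
      assert (Hb : forall b, lsum (fun u => P (s ++ b :: u)) (tails b L) <= P (s ++ [b])).
      { intros b.
        assert (E : lsum (fun u => P (s ++ b :: u)) (tails b L) =
                    lsum (fun u => P ((s ++ [b]) ++ u)) (tails b L)).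
        { f_equal. apply functional_extensionality; intros u.
          rewrite <- app_assoc; reflexivity. }
        rewrite E. apply IH. apply tails_nodup; auto.
        intros u Hu. apply tails_in in Hu. destruct (H _ Hu) as [Hl [Hc Hf]].
        simpl in Hl. split; [lia|]. split.
        - rewrite <- app_assoc; exact Hc.
        - intros j Hj. rewrite <- app_assoc. apply (Hf (S j)). simpl; lia. }
      pose proof (Hb false). pose proof (Hb true). lra.
Qed.
End Antichain.

Fixpoint toL (p : positive) : list bool :=
  match p with xH => [] | xO p => false :: toL p | xI p => true :: toL p end.
Fixpoint fromL (l : list bool) : positive :=
  match l with [] => xH | false :: l => xO (fromL l) | true :: l => xI (fromL l) end.
Lemma toL_fromL l : toL (fromL l) = l.
Proof. induction l as [|[] l IH]; simpl; congruence. Qed.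
Lemma fromL_toL p : fromL (toL p) = p.
Proof. induction p; simpl; congruence. Qed.

Definition word (n : nat) : list bool := toL (Pos.of_succ_nat n).
Lemma word_inj n m : word n = word m -> n = m.
Proof.
  unfold word; intros H. apply SuccNat2Pos.inj.
  rewrite <- (fromL_toL (Pos.of_succ_nat n)), <- (fromL_toL (Pos.of_succ_nat m)), H; auto.
Qed.
Lemma word_surj l : exists n, word n = l.
Proof.
  exists (Nat.pred (Pos.to_nat (fromL l))). unfold word.
  rewrite SuccNat2Pos.inv with (p := fromL l). apply toL_fromL.
  pose proof (Pos2Nat.is_pos (fromL l)). lia.
Qed.

Fixpoint unary (l : list bool) : option (nat * list bool) :=
  match l with
  | [] => None
  | false :: u => Some (0%nat, u)
  | true :: l => match unary l with Some (k, u) => Some (S k, u) | None => None end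
  end.
Lemma unary_enc k u : unary (repeat true k ++ false :: u) = Some (k, u).
Proof. induction k; simpl; auto. rewrite IHk; auto. Qed.
Lemma unary_inj l l' p : unary l = Some p -> unary l' = Some p -> l = l'.
Proof.
  revert l' p; induction l as [|[] l IH]; intros l' p H H'; simpl in H; try discriminate.
  - destruct (unary l) as [[k u]|] eqn:E; try discriminate.
    destruct l' as [|[] l']; simpl in H'; try discriminate.
    + destruct (unary l') as [[k' u']|] eqn:E'; try discriminate.
      f_equal. apply (IH l' (k', u')); [|exact E']. rewrite <- E. f_equal. congruence.
    + rewrite <- H' in H. discriminate.
  - injection H; intros; subst. destruct l' as [|[] l']; simpl in H'; try discriminate.
    + destruct (unary l'); [destruct p|]; discriminate.
    + injection H'; intros; subst; auto.
Qed.

Definition dec (n : nat) : option (nat * list bool) := unary (word n).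
Lemma dec_inj n m p : dec n = Some p -> dec m = Some p -> n = m.
Proof. unfold dec; intros H H'. apply word_inj. eapply unary_inj; eauto. Qed.
Lemma dec_surj k u : exists n, dec n = Some (k, u).
Proof.
  destruct (word_surj (repeat true k ++ false :: u)) as [n Hn]. exists n.
  unfold dec; rewrite Hn; apply unary_enc.
Qed.

Lemma sum_lsum (F : nat -> R) N : sum_f_R0 F N = lsum F (seq 0 (S N)).
Proof.
  induction N; [unfold lsum; simpl; ring|].
  rewrite seq_S, lsum_app. simpl sum_f_R0. rewrite IHN. unfold lsum at 3; simpl. ring.
Qed.

Lemma lsum_flat {A} (w : A -> R) (pl : nat -> list A) l :
  lsum (fun n => lsum w (pl n)) l = lsum w (flat_map pl l).
Proof. induction l; simpl; [reflexivity|]. rewrite lsum_app, <- IHl. reflexivity. Qed.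

Lemma nodup_flat {A} (pl : nat -> list A) l : NoDup l -> (forall n, NoDup (pl n)) ->
  (forall n m p, In p (pl n) -> In p (pl m) -> n = m) -> NoDup (flat_map pl l).
Proof.
  induction l as [|a l IH]; simpl; intros ND H1 H2; [constructor|]. inversion ND; subst.
  apply NoDup_app; auto. intros p Hp Hp'. apply in_flat_map in Hp' as [n [Hn Hpn]].
  assert (a = n) by (eapply H2; eauto). subst; auto.
Qed.

Definition sel (k : nat) (l : list (nat * list bool)) : list (list bool) :=
  flat_map (fun p => if Nat.eqb (fst p) k then [snd p] else []) l.
Definition rest (k : nat) (l : list (nat * list bool)) := filter (fun p => negb (Nat.eqb (fst p) k)) l.

Lemma sel_in k l u : In u (sel k l) -> In (k, u) l.
Proof.
  induction l as [|[a b] l IH]; simpl; [tauto|]. intros H. apply in_app_or in H as [H|H]; auto.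
  destruct (Nat.eqb a k) eqn:E; [|destruct H]. apply Nat.eqb_eq in E; subst.
  destruct H as [H|[]]; subst; auto.
Qed.

Lemma sel_nodup k l : NoDup l -> NoDup (sel k l).
Proof.
  induction l as [|[a b] l IH]; simpl; intros H; [constructor|]. inversion H; subst.
  destruct (Nat.eqb a k) eqn:E; simpl; auto. apply Nat.eqb_eq in E; subst.
  constructor; auto. intros Hin; apply sel_in in Hin; auto.
Qed.

Lemma lsum_sel (w : nat * list bool -> R) k l :
  lsum w l = lsum (fun u => w (k, u)) (sel k l) + lsum w (rest k l).
Proof.
  induction l as [|[a b] l IH]; [unfold lsum; simpl; ring|].
  unfold sel, rest in *; cbn [flat_map filter]. simpl fst; simpl snd.
  change (lsum w ((a, b) :: l)) with (w (a, b) + lsum w l). rewrite lsum_app, IH.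
  destruct (Nat.eqb a k) eqn:E; simpl; unfold lsum; simpl.
  - apply Nat.eqb_eq in E; subst. ring.
  - ring.
Qed.

Section Group.
Variable w : nat * list bool -> R.
Variable ct : nat -> R.
Variable V : nat -> list bool -> Prop.
Hypothesis HV : forall k L, NoDup L -> (forall u, In u L -> V k u) ->
  lsum (fun u => w (k, u)) L <= ct k.

Lemma group K : forall l, NoDup l -> (forall p, In p l -> (fst p <= K)%nat /\ V (fst p) (snd p)) ->
  lsum w l <= sum_f_R0 ct K.
Proof.
  induction K; intros l ND H.
  - rewrite (lsum_sel w 0%nat l). simpl sum_f_R0.
    assert (E : rest 0 l = []).
    { destruct (rest 0 l) as [|p r] eqn:Er; auto. exfalso.
      assert (Hp : In p (rest 0 l)) by (rewrite Er; simpl; auto).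
      unfold rest in Hp. apply filter_In in Hp as [Hp Hn]. destruct (H p Hp) as [Hk _].
      assert (fst p = 0%nat) by lia. rewrite H0 in Hn. discriminate. }
    rewrite E. unfold lsum at 2; simpl.
    assert (lsum (fun u => w (0%nat, u)) (sel 0 l) <= ct 0%nat).
    { apply HV. apply sel_nodup; auto. intros u Hu. apply sel_in in Hu. apply (H _ Hu). }
    lra.
  - rewrite (lsum_sel w (S K) l). simpl sum_f_R0.
    assert (lsum (fun u => w (S K, u)) (sel (S K) l) <= ct (S K)).
    { apply HV. apply sel_nodup; auto. intros u Hu. apply sel_in in Hu. apply (H _ Hu). }
    assert (lsum w (rest (S K) l) <= sum_f_R0 ct K).
    { apply IHK. unfold rest; apply NoDup_filter; auto.
      intros p Hp. unfold rest in Hp. apply filter_In in Hp as [Hp Hn].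
      destruct (H p Hp) as [Hk HVp]. split; auto.
      destruct (Nat.eqb_spec (fst p) (S K)); simpl in Hn; [discriminate|lia]. }
    lra.
Qed.
End Group.

Definition Eset (which f g : Strategy) (X : Seq -> Prop) : R -> Prop :=
  fun x => exists c, covers c X /\ infinite_sum (cover_term which f g c) x.

Lemma cover_term_nonneg which f g c k : 0 <= cover_term which f g c k.
Proof. unfold cover_term. destruct (c k); [apply cylprob_nonneg|lra]. Qed.

Lemma sum_le_lim (F : nat -> R) x N : (forall n, 0 <= F n) -> infinite_sum F x -> sum_f_R0 F N <= x.
Proof. intros H1 H2. apply sum_incr; auto. Qed.

Lemma lim_le_bound (U : nat -> R) l B : Un_cv U l -> (forall n, U n <= B) -> l <= B.
Proof.
  intros Hc HB. destruct (Rle_dec l B) as [|Hn]; auto. exfalso.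
  destruct (Hc (l - B)) as [N HN]; [lra|]. specialize (HN N (le_n N)).
  unfold Rdist in HN. specialize (HB N). apply Rabs_def2 in HN. lra.
Qed.

Lemma Eset_nonneg which f g X x : Eset which f g X x -> 0 <= x.
Proof.
  intros [c [_ H]]. pose proof (sum_le_lim _ x 0 (cover_term_nonneg which f g c) H).
  simpl in H0. pose proof (cover_term_nonneg which f g c 0). lra.
Qed.

Lemma Eset_inhabited which f g X : exists x, Eset which f g X x.
Proof.
  exists 1. exists (fun n => match n with O => Some [] | _ => None end). split.
  - intros w _. exists 0%nat, []. split; auto. intros n Hn; simpl in Hn; lia.
  - assert (Hs : forall n, sum_f_R0 (cover_term which f g (fun n => match n with O => Some [] | _ => None end)) n = 1).
    { induction n; simpl; [unfold cover_term, cylprob; simpl; ring|]. rewrite IHn. unfold cover_term; ring. }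
    intros eps Heps. exists 0%nat. intros n _. rewrite Hs. unfold Rdist. rewrite Rminus_diag, Rabs_R0. lra.
Qed.

Lemma glb_exists which f g X : exists m, is_glb (Eset which f g X) m.
Proof.
  set (E' := fun y => Eset which f g X (- y)).
  assert (Hb : bound E'). { exists 0. intros y Hy. apply Eset_nonneg in Hy. lra. }
  assert (Hi : exists y, E' y).
  { destruct (Eset_inhabited which f g X) as [x Hx]. exists (- x). unfold E'. rewrite Ropp_involutive; auto. }
  destruct (completeness E' Hb Hi) as [m [Hub Hl]]. exists (- m). split.
  - intros x Hx. assert (E' (- x)) by (unfold E'; rewrite Ropp_involutive; auto).
    specialize (Hub _ H). lra.
  - intros m' Hm'. assert (m <= - m').
    { apply Hl. intros y Hy. specialize (Hm' _ Hy). lra. }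
    lra.
Qed.

Lemma measure_glb which f g X : is_glb (Eset which f g X) (measure which f g X).
Proof.
  unfold measure. apply (epsilon_spec (inhabits 0) (is_glb _)). apply glb_exists.
Qed.

Lemma measure_compare w1 w2 f g X c : 0 < c ->
  (forall x, Eset w2 f g X x -> exists y, Eset w1 f g X y /\ y <= c * x) ->
  measure w1 f g X <= c * measure w2 f g X.
Proof.
  intros Hc H. destruct (measure_glb w1 f g X) as [H1 _]. destruct (measure_glb w2 f g X) as [_ H2].
  assert (measure w1 f g X / c <= measure w2 f g X).
  { apply H2. intros x Hx. destruct (H x Hx) as [y [Hy Hyx]]. specialize (H1 y Hy).
    apply Rmult_le_reg_r with c; auto. unfold Rdiv. rewrite Rmult_assoc, Rinv_l by lra. nra. }
  apply Rmult_le_reg_r with (/ c). { apply Rinv_0_lt_compat; auto. }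
  replace (c * measure w2 f g X * / c) with (measure w2 f g X) by (field; lra). exact H0.
Qed.

Lemma firstn_seq j a b : (j <= b)%nat -> firstn j (seq a b) = seq a j.
Proof.
  revert a b; induction j; intros a b H; simpl; auto. destruct b; [lia|]. simpl. f_equal. apply IHj; lia.
Qed.

Lemma least_exists (Q : nat -> Prop) t0 : (exists t, (t0 <= t)%nat /\ Q t) ->
  exists t, (t0 <= t)%nat /\ Q t /\ forall t', (t0 <= t' < t)%nat -> ~ Q t'.
Proof.
  intros [t [Ht HQ]].
  assert (G : forall n t, (t <= n)%nat -> (t0 <= t)%nat -> Q t ->
            exists t, (t0 <= t)%nat /\ Q t /\ forall t', (t0 <= t' < t)%nat -> ~ Q t').
  { induction n; intros t1 H1 H2 H3.
    - exists t1. split; [auto|split; [auto|]]. intros t' Ht'. lia.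
    - destruct (classic (exists t', (t0 <= t' < t1)%nat /\ Q t')) as [[t' [Ht' HQ']]|Hno].
      + apply (IHn t'); [lia|lia|exact HQ'].
      + exists t1. split; [auto|split; [auto|]]. intros t' Ht' HQ'. apply Hno; eauto. }
  apply (G t t); auto.
Qed.

Lemma list_max_bound {A} (h : A -> nat) (l : list A) p : In p l -> (h p <= list_max (map h l))%nat.
Proof.
  intros H. assert (Hf : Forall (fun k => k <= list_max (map h l))%nat (map h l)).
  { apply list_max_le. lia. }
  rewrite Forall_forall in Hf. apply Hf. apply in_map; auto.
Qed.

Section Key.
Variables w1 w2 f g : Strategy.
Variable c : R.
Variable cond : list bool -> Prop.
Variable X : Seq -> Prop.
Hypothesis cpos : 0 < c.
Hypothesis Hc : forall s, cond s -> cylprob w1 f g s <= c * cylprob w2 f g s.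
Hypothesis HX : forall om, X om -> forall t0, exists t, (t0 <= t)%nat /\ cond (pre om t).

Lemma key_measure : measure w1 f g X <= c * measure w2 f g X.
Proof.
  apply measure_compare; auto.
  intros x [c0 [Hcov Hsum]].
  set (valid := fun k u => match c0 k with Some s => firsthit cond s u | None => False end).
  set (newc := fun n => match dec n with
                 | Some (k, u) => match c0 k with
                     | Some s => if excluded_middle_informative (firsthit cond s u) then Some (s ++ u) else None
                     | None => None end
                 | None => None end).
  set (wt := fun p : nat * list bool => match c0 (fst p) with Some s => cylprob w2 f g (s ++ snd p) | None => 0 end).
  set (pl := fun n => match dec n with
                 | Some p => if excluded_middle_informative (valid (fst p) (snd p)) then [p] else []
                 | None => [] end).
  assert (Ht2 : forall n, cover_term w2 f g newc n = lsum wt (pl n)).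
  { intros n. unfold cover_term, newc, pl, valid, wt. destruct (dec n) as [[k u]|]; [|reflexivity].
    simpl fst; simpl snd. destruct (c0 k) as [s|] eqn:Ek.
    - destruct (excluded_middle_informative (firsthit cond s u)); unfold lsum; simpl; [rewrite Ek; ring|reflexivity].
    - destruct (excluded_middle_informative False); [contradiction|reflexivity]. }
  assert (Ht12 : forall n, cover_term w1 f g newc n <= c * cover_term w2 f g newc n).
  { intros n. unfold cover_term, newc. destruct (dec n) as [[k u]|]; [|lra].
    destruct (c0 k) as [s|]; [|lra].
    destruct (excluded_middle_informative (firsthit cond s u)) as [[Hh _]|]; [|lra].
    apply Hc; auto. }
  assert (Hct : forall k, 0 <= cover_term w2 f g c0 k) by (intros; apply cover_term_nonneg).
  assert (Hbound2 : forall N, sum_f_R0 (cover_term w2 f g newc) N <= x).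
  { intros N. rewrite sum_lsum. rewrite (lsum_ext _ _ _ Ht2), lsum_flat.
    set (L := flat_map pl (seq 0 (S N))).
    apply Rle_trans with (sum_f_R0 (cover_term w2 f g c0) (list_max (map fst L))).
    2: { apply sum_le_lim; auto. }
    apply group with (V := valid).
    - intros k L0 ND HV. unfold valid in HV. unfold wt, cover_term; simpl fst; simpl snd.
      destruct (c0 k) as [s|] eqn:Ek.
      + apply (antichain (cylprob w2 f g) (cylprob_nonneg w2 f g) (cylprob_split w2 f g) cond
                 (list_max (map (@length bool) L0))); auto.
        intros u Hu. split; [apply (list_max_bound (@length bool)); auto|auto].
      + destruct L0 as [|a L0]; [unfold lsum; simpl; lra|]. exfalso; apply (HV a); simpl; auto.
    - unfold L. apply nodup_flat. apply seq_NoDup.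
      + intros n. unfold pl. destruct (dec n); [|constructor].
        destruct (excluded_middle_informative _); repeat constructor; auto.
      + intros n m p Hn Hm. unfold pl in Hn, Hm.
        destruct (dec n) eqn:En; [|destruct Hn]. destruct (excluded_middle_informative _); [|destruct Hn].
        destruct (dec m) eqn:Em; [|destruct Hm]. destruct (excluded_middle_informative _); [|destruct Hm].
        destruct Hn as [Hn|[]]; destruct Hm as [Hm|[]]; subst. eapply dec_inj; eauto.
    - intros p Hp. split; [apply (list_max_bound fst); auto|].
      unfold L in Hp. apply in_flat_map in Hp as [n [_ Hn]]. unfold pl in Hn.
      destruct (dec n); [|destruct Hn]. destruct (excluded_middle_informative _); [|destruct Hn].
      destruct Hn as [Hn|[]]; subst; auto. }
  set (U := fun N => sum_f_R0 (cover_term w1 f g newc) N).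
  assert (HU : forall N, U N <= c * x).
  { intros N. unfold U. apply Rle_trans with (c * sum_f_R0 (cover_term w2 f g newc) N).
    - rewrite !sum_lsum, <- lsum_scal. apply lsum_le; auto.
    - apply Rmult_le_compat_l; [lra|auto]. }
  assert (Hg : Un_growing U).
  { intros n. unfold U; simpl. pose proof (cover_term_nonneg w1 f g newc (S n)). lra. }
  assert (Hub : has_ub U). { exists (c * x). intros y [i ->]. auto. }
  destruct (growing_cv U Hg Hub) as [y Hy].
  exists y. split.
  2: { apply (lim_le_bound U); auto. }
  exists newc. split; [|exact Hy].
  intros om Hom. destruct (Hcov om Hom) as [k [s [Hk Hs]]].
  destruct (least_exists (fun t => cond (pre om t)) (length s) (HX om Hom (length s)))
    as [t [Ht [Hct1 Hmin]]].
  set (u := map om (seq (length s) (t - length s))).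
  assert (Hsu : forall j, (j <= t - length s)%nat -> s ++ firstn j u = pre om (length s + j)).
  { intros j Hj. unfold u. rewrite firstn_map, firstn_seq by auto. rewrite pre_add, cyl_pre; auto. }
  assert (Hfh : firsthit cond s u).
  { split.
    - assert (E := Hsu (t - length s)%nat (le_n _)).
      rewrite firstn_all2 in E by (unfold u; rewrite length_map, length_seq; lia).
      rewrite E. replace (length s + (t - length s))%nat with t by lia. auto.
    - intros j Hj. unfold u in Hj; rewrite length_map, length_seq in Hj.
      rewrite Hsu by lia. apply Hmin. lia. }
  destruct (dec_surj k u) as [n Hn]. exists n, (s ++ u). split.
  - unfold newc. rewrite Hn, Hk. destruct (excluded_middle_informative (firsthit cond s u)); [auto|contradiction].
  - assert (E := Hsu (t - length s)%nat (le_n _)).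
    rewrite firstn_all2 in E by (unfold u; rewrite length_map, length_seq; lia).
    rewrite E. apply cyl_pre_self.
Qed.
End Key.

Definition Dfun (F G : R) : R :=
  if Rlt_dec 0 F then F / (F + G) else if Rlt_dec 0 G then F / (F + G) else 1/2.

Lemma D_lt F G eps : 0 <= F -> 0 <= G -> eps < 1/2 -> Dfun F G < eps -> (1 - eps) * F < eps * G.
Proof.
  unfold Dfun; intros HF HG He H. destruct (Rlt_dec 0 F).
  - assert (E : F = F / (F + G) * (F + G)) by (field; lra).
    set (q := F / (F + G)) in *. nra.
  - assert (F = 0) by lra. subst. destruct (Rlt_dec 0 G); [nra|lra].
Qed.

Lemma D_gt F G eps : 0 <= F -> 0 <= G -> 1/2 < eps -> eps < Dfun F G -> eps * G < (1 - eps) * F.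
Proof.
  unfold Dfun; intros HF HG He H. destruct (Rlt_dec 0 F).
  - assert (E : F = F / (F + G) * (F + G)) by (field; lra).
    set (q := F / (F + G)) in *. nra.
  - assert (F = 0) by lra. subst. destruct (Rlt_dec 0 G).
    + rewrite Rdiv_0_l in H. lra.
    + lra.
Qed.

Theorem proposition2 : error_free derivative_test.
Proof.
  intros f g A _. split.
  - intros eps Heps.
    apply (key_measure f g f g (eps / (1 - eps))
             (fun s => (1 - eps) * cylprob f f g s < eps * cylprob g f g s)).
    + apply Rdiv_lt_0_compat; lra.
    + intros s Hs. apply Rmult_le_reg_l with (1 - eps); [lra|].
      replace ((1 - eps) * (eps / (1 - eps) * cylprob g f g s)) with (eps * cylprob g f g s) by (field; lra).
      lra.
    + intros om [_ [l [Hl Hle]]] t0. destruct (Hl (eps - l)) as [N HN]; [lra|].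
      exists (Nat.max t0 N). split; [lia|].
      specialize (HN (Nat.max t0 N) ltac:(lia)). unfold Rdist in HN. apply Rabs_def2 in HN.
      rewrite D_hist in HN. apply D_lt; try apply cylprob_nonneg; [lra|].
      unfold Dfun. lra.
  - intros eps Heps.
    apply (key_measure g f f g ((1 - eps) / eps)
             (fun s => eps * cylprob g f g s < (1 - eps) * cylprob f f g s)).
    + apply Rdiv_lt_0_compat; lra.
    + intros s Hs. apply Rmult_le_reg_l with eps; [lra|].
      replace (eps * ((1 - eps) / eps * cylprob f f g s)) with ((1 - eps) * cylprob f f g s) by (field; lra).
      lra.
    + intros om [_ [l [Hl Hle]]] t0. destruct (Hl (l - eps)) as [N HN]; [lra|].
      exists (Nat.max t0 N). split; [lia|].
      specialize (HN (Nat.max t0 N) ltac:(lia)). unfold Rdist in HN. apply Rabs_def2 in HN.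
      rewrite D_hist in HN. apply D_gt; try apply cylprob_nonneg; [lra|].
      unfold Dfun. lra.
Qed.
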